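(* Let $G$ be a compact metrizable abelian monothetic group with Haar measure $\mu$. If $A\subset G$ has $\mu(A)>0$, then $2A-A=\{2a-b:a,b\in A\}$ contains a nonempty open set.
   Context: A topological group is monothetic if it has a dense cyclic subgroup. *)

(* Defs.v *)
From HB Require Import structures.
From mathcomp Require Import all_boot all_order all_algebra.
From mathcomp Require Import all_classical all_reals all_analysis.
Set Implicit Arguments. Unset Strict Implicit. Unset Printing Implicit Defensive.
Import Order.TTheory GRing.Theory Num.Theory.
Local Open Scope classical_set_scope.
Local Open Scope ring_scope.

Definition metrizable (R : realType) (T : topologicalType) : Prop :=
  exists d : T -> T -> R,
    [/\ (forall x y, 0 <= d x y),
        (forall x y, d x y = 0 <-> x = y),
        (forall x y, d x y = d y x),
        (forall x y z, d x z <= d x y + d y z) &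
        (forall U : set T, open U <->
           (forall x, U x -> exists2 e : R, 0 < e & [set y | d x y < e] `<=` U))].

Definition monothetic (G : topologicalZmodType) : Prop :=
  exists g : G, dense [set g *~ n | n in [set: int]].

(* The Borel sigma-algebra of a topological abelian group G:
   [borel_of G] is G (as a type) equipped with the sigma-algebra generated
   by the open sets of G. *)
Definition borel_of (G : topologicalZmodType) : Type := G.
Section BorelInstance.
Variable G : topologicalZmodType.
HB.instance Definition _ := Choice.on (borel_of G).
HB.instance Definition _ := isPointed.Build (borel_of G) (0 : G).
Definition borel_opens : set (set (borel_of G)) := [set U | open U].
HB.instance Definition _ := @isMeasurable.Build (sigma_display borel_opens)
  (borel_of G) <<s borel_opens >> (@sigma_algebra0 _ setT borel_opens)
  (@sigma_algebraC _ borel_opens) (@sigma_algebra_bigcup _ setT borel_opens).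
End BorelInstance.

Definition haar_measure (R : realType) (G : topologicalZmodType)
    (mu : set (borel_of G) -> \bar R) : Prop :=
  mu [set: borel_of G] = 1%E /\
  (forall (x : G) (A : set (borel_of G)), measurable A ->
     mu [set x + a | a in A] = mu A).

Definition twoA_minus_A (G : zmodType) (A : set G) : set G :=
  [set a *+ 2 - b | a in A & b in A].

(* Main.v *)
Require Import Defs.
From HB Require Import structures.
From mathcomp Require Import all_boot all_order all_algebra.
From mathcomp Require Import all_classical all_reals all_analysis.
From mathcomp Require Import lra.
Import Order.TTheory GRing.Theory Num.Theory.
Local Open Scope classical_set_scope.
Local Open Scope ring_scope.
Set Implicit Arguments. Unset Strict Implicit. Unset Printing Implicit Defensive.


Section Topo.
Variables (R : realType) (G : topologicalZmodType) (d : G -> G -> R).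
Hypotheses (d0 : forall x y, 0 <= d x y) (dE : forall x y, d x y = 0 <-> x = y)
  (dC : forall x y, d x y = d y x) (dT : forall x y z, d x z <= d x y + d y z)
  (dO : forall U : set G, open U <->
           (forall x, U x -> exists2 e : R, 0 < e & [set y | d x y < e] `<=` U)).

Definition ball_ x e := [set y | d x y < e].

Lemma ball_open x e : open (ball_ x e).
Proof.
apply/dO => y /= hy; exists (e - d x y); first by rewrite subr_gt0.
move=> z /= hz; have := dT x y z; rewrite /ball_ /=; lra.
Qed.

Lemma ball_center x e : 0 < e -> ball_ x e x.
Proof. by move=> e0; rewrite /ball_ /= (proj2 (dE x x) erefl). Qed.

Lemma ball_nbhs x e : 0 < e -> nbhs x (ball_ x e).
Proof. by move=> e0; apply: open_nbhs_nbhs; split; [exact: ball_open|exact: ball_center]. Qed.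

Lemma nbhs_ball x U : nbhs x U -> exists2 e, 0 < e & ball_ x e `<=` U.
Proof.
rewrite nbhsE => -[B [oB Bx] BU]; have [e e0 he] := (dO B).1 oB x Bx.
by exists e => // y /he; apply: BU.
Qed.

Lemma hausdorffG : hausdorff_space G.
Proof.
move=> p q cl; apply: contrapT => npq.
have hr : 0 < d p q.
  rewrite lt_neqAle d0 andbT; apply/eqP => h; apply: npq; exact/dE.
have [z [/= h1 h2]] := cl _ _ (@ball_nbhs p (d p q / 2) ltac:(lra))
   (@ball_nbhs q (d p q / 2) ltac:(lra)).
have := dT p z q; rewrite /ball_ /= in h1 h2; rewrite (dC z q); lra.
Qed.

End Topo.


Section Meas.
Variable G : topologicalZmodType.

Lemma addl_cont (x : G) : continuous (fun y : G => x + y).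
Proof.
move=> y; apply: (@continuous_comp _ _ _ (fun y => (x, y)) (fun z : G * G => z.1 + z.2)).
  by apply: cvg_pair; [exact: cvg_cst|exact: cvg_id].
exact: add_continuous.
Qed.

Lemma double_cont : continuous (fun y : G => y *+ 2).
Proof.
move=> y; apply: (@continuous_comp _ _ _ (fun y => (y, y)) (fun z : G * G => z.1 + z.2)).
  by apply: cvg_pair; exact: cvg_id.
exact: add_continuous.
Qed.

Lemma comp_cont (f g : G -> G) : continuous f -> continuous g -> continuous (f \o g).
Proof. by move=> cf cg x; apply: continuous_comp; [exact: cg|exact: cf]. Qed.

Lemma open_meas (U : set G) : open U -> measurable (U : set (borel_of G)).
Proof. by move=> oU; apply: sub_gen_smallest. Qed.

Lemma closed_meas (U : set G) : closed U -> measurable (U : set (borel_of G)).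
Proof.
move=> cU; rewrite -[U]setCK; apply: measurableC; apply: open_meas.
exact: closed_openC.
Qed.

Lemma cont_measfun (f : G -> G) : continuous f ->
  measurable_fun [set: borel_of G] (f : borel_of G -> borel_of G).
Proof.
move=> cf; apply: (measurability (@borel_opens G)) => //.
move=> _ [U oU <-]; rewrite setTI; apply: open_meas.
by move/continuousP : cf; apply.
Qed.


Lemma preimage_meas (f : G -> G) (A : set G) : continuous f ->
  measurable (A : set (borel_of G)) -> measurable (f @^-1` A : set (borel_of G)).
Proof.
move=> cf mA; have := cont_measfun cf measurableT mA; by rewrite setTI.
Qed.

Lemma translate_preimage (x : G) (A : set G) :
  [set x + a | a in A] = (fun y => - x + y) @^-1` A.
Proof.
apply/seteqP; split => [y [a Aa <-]|y /= Ay]; first by rewrite /= addKr.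
by exists (- x + y) => //; rewrite addNKr.
Qed.

Lemma translate_meas (x : G) (A : set G) : measurable (A : set (borel_of G)) ->
  measurable ([set x + a | a in A] : set (borel_of G)).
Proof. by move=> mA; rewrite translate_preimage; apply: preimage_meas => //; exact: addl_cont. Qed.

End Meas.


Section Reg.
Variables (R : realType) (G : topologicalZmodType).
Variable (mu : {measure set (borel_of G) -> \bar R}).
Hypothesis mu1 : mu setT = 1%E.

Lemma mu_fin (B : set (borel_of G)) : measurable B -> mu B \is a fin_num.
Proof.
move=> mB; rewrite ge0_fin_numE ?measure_ge0 //.
apply: (@le_lt_trans _ _ (mu setT)); last by rewrite mu1 ltry.
by apply: le_measure; rewrite ?inE //.
Qed.

Lemma inner_approx (F : nat -> set (borel_of G)) :
  (forall n, measurable (F n)) -> (forall n m, (n <= m)%N -> F n `<=` F m) ->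
  forall e : R, 0 < e -> exists N, (mu (\bigcup_n F n `\` F N) < e%:E)%E.
Proof.
move=> mF ndF e e0.
have mU : measurable (\bigcup_n F n) by exact: bigcupT_measurable.
have cv := @nondecreasing_cvg_mu _ _ _ mu F mF mU (fun n m nm => introT (@subsetPset _ (F n) (F m)) (ndF n m nm)).
have fin := mu_fin mU.
rewrite -(fineK fin) in cv.
have := (cvgrPdist_lt _ _).1 (fine_cvg cv) e e0.
case=> N _ HN; exists N; have := HN N (leqnn N) => /=.
rewrite measureD //; last by move: (mu_fin mU); rewrite ge0_fin_numE ?measure_ge0.
rewrite setIidr; last by move=> x Fx; exists N.
move=> h; rewrite -[X in (X - _)%E](fineK fin) -[X in (_ - X)%E](fineK (mu_fin (mF N))) -EFinB lte_fin.
by apply: le_lt_trans h; apply: ler_norm.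
Qed.
End Reg.


Lemma small_inv (R : realType) (e : R) : 0 < e -> exists n : nat, n.+1%:R^-1 < e.
Proof.
move=> e0; exists (Num.trunc (e^-1)).
rewrite -[e in _ < e]invrK ltf_pV2 ?posrE ?invr_gt0 ?ltr0Sn //.
exact: truncnS_gt.
Qed.

Lemma inv_anti (R : realType) (n m : nat) : (n <= m)%N -> m.+1%:R^-1 <= n.+1%:R^-1 :> R.
Proof. by move=> nm; rewrite lef_pV2 ?posrE ?ltr0Sn // ler_nat ltnS. Qed.

Section Reg2.
Variables (R : realType) (G : topologicalZmodType) (d : G -> G -> R).
Hypotheses (d0 : forall x y, 0 <= d x y) (dE : forall x y, d x y = 0 <-> x = y)
  (dC : forall x y, d x y = d y x) (dT : forall x y z, d x z <= d x y + d y z)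
  (dO : forall U : set G, open U <->
           (forall x, U x -> exists2 e : R, 0 < e & [set y | d x y < e] `<=` U)).
Variable (mu : {measure set (borel_of G) -> \bar R}).
Hypothesis mu1 : mu setT = 1%E.

Definition reg (B : set G) := forall e : R, 0 < e -> exists F O : set G,
  [/\ closed F, open O, F `<=` B, B `<=` O & (mu (O `\` F) < e%:E)%E].

Lemma reg_open O : open O -> reg O.
Proof.
move=> oO e e0.
pose W (n : nat) := [set x | exists2 z, ~ O z & d z x < n.+1%:R^-1].
have oW n : open (W n).
  apply/dO => x [z nOz dzx]; exists (n.+1%:R^-1 - d z x); first by rewrite subr_gt0.
  move=> y /= dxy; exists z => //; apply: le_lt_trans (dT z x y) _; rewrite addrC -ltrBrDr; exact: dxy.
pose F n := ~` W n.
have mF n : measurable (F n : set (borel_of G)).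
  by apply: closed_meas; exact: open_closedC.
have ndF n m : (n <= m)%N -> F n `<=` F m.
  move=> nm x Fx [z nOz dzx]; apply: Fx; exists z => //.
  by apply: lt_le_trans dzx _; exact: inv_anti.
have UF : \bigcup_n F n = O.
  apply/seteqP; split.
    move=> x [n _ Fx]; apply: contrapT => nOx; apply: Fx; exists x => //.
    by rewrite (proj2 (dE x x) erefl) invr_gt0 ltr0Sn.
  move=> x Ox; have [e' e'0 he'] := (dO O).1 oO x Ox.
  have [n hn] := small_inv e'0; exists n => // -[z nOz dzx]; apply: nOz.
  by apply: he' => /=; rewrite dC; exact: lt_trans dzx hn.
have [N hN] := inner_approx mu1 mF ndF e0.
exists (F N), O; split => //.
- exact: open_closedC.
- by rewrite -UF => x Fx; exists N.
- by rewrite UF in hN.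
Qed.


Lemma reg_all (B : set G) : measurable (B : set (borel_of G)) -> reg B.
Proof.
pose C := [set B : set (borel_of G) | measurable B /\ reg B].
suff sC : sigma_algebra setT C.
  move=> mB; have : C B; last by case.
  apply: (smallest_sub sC _ mB) => U oU; split; first exact: open_meas.
  exact: reg_open.
split.
- split => // e e0; exists set0, set0; split => //; [exact: closed0|exact: open0|].
  by rewrite set0D measure0 lte_fin.
- move=> A [mA rA]; split; first exact: measurableD.
  move=> e e0; have [F [Ou [cF oO FA AO h]]] := rA e e0.
  exists (~` Ou), (~` F); split.
  + exact: open_closedC.
  + exact: closed_openC.
  + by move=> x nOx; split => // Ax; apply: nOx; apply: AO.
  + by move=> x [_ nAx] Fx; apply: nAx; apply: FA.
  + suff -> : ~` F `\` ~` Ou = Ou `\` F by [].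
    by rewrite setDE setCK setIC -setDE.
- move=> A hA; split; first by apply: bigcupT_measurable => n; case: (hA n).
  move=> e e0.
  have e40 : 0 < e / 4 by rewrite divr_gt0.
  have : forall n, exists FO : set G * set G, [/\ closed FO.1, open FO.2,
     FO.1 `<=` A n, A n `<=` FO.2 &
     (mu (FO.2 `\` FO.1) < (e / 4 / (2 ^ n.+1)%:R)%:E)%E].
    move=> n; have [_ rAn] := hA n.
    have [F [Ou [? ? ? ? ?]]] := rAn (e / 4 / (2 ^ n.+1)%:R)
      ltac:(by rewrite divr_gt0 // ltr0n expn_gt0).
    by exists (F, Ou).
  move=> /choice [fo hfo].
  pose F n := (fo n).1; pose O n := (fo n).2.
  have cF n : closed (F n) by case: (hfo n).
  have oO n : open (O n) by case: (hfo n).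
  have FA n : F n `<=` A n by case: (hfo n).
  have AO n : A n `<=` O n by case: (hfo n).
  have hOF n : (mu (O n `\` F n) < (e / 4 / (2 ^ n.+1)%:R)%:E)%E by case: (hfo n).
  pose FF := fix FF n := if n is k.+1 then FF k `|` F k else set0.
  have cFF n : closed (FF n).
    by elim: n => [|n ih] /=; [exact: closed0| exact: closedU].
  have mFF n : measurable (FF n : set (borel_of G)) by apply: closed_meas.
  have ndFF n m : (n <= m)%N -> FF n `<=` FF m.
    elim: m => [|m ih]; first by rewrite leqn0 => /eqP ->.
    rewrite leq_eqVlt => /orP [/eqP -> //|]; rewrite ltnS => /ih h x /h.
    by move=> ?; left.
  have UFF : \bigcup_n FF n = \bigcup_n F n.
    apply/seteqP; split.
      move=> x [n _]; elim: n => [//|n ih] /= [/ih //|Fx]; by exists n.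
    by move=> x [n _ Fx]; exists n.+1 => //=; right.
  have [N hN] := inner_approx mu1 mFF ndFF e40.
  rewrite UFF in hN.
  have mF n : measurable (F n : set (borel_of G)) by apply: closed_meas.
  have mO n : measurable (O n : set (borel_of G)) by apply: open_meas.
  have mUF : measurable (\bigcup_n F n : set (borel_of G)) by exact: bigcupT_measurable.
  have mUO : measurable (\bigcup_n O n : set (borel_of G)) by exact: bigcupT_measurable.
  exists (FF N), (\bigcup_n O n); split.
  + exact: cFF.
  + by apply: bigcup_open => n _; exact: oO.
  + move=> x FFx; have : (\bigcup_n FF n) x by exists N.
    by rewrite UFF => -[n _ /FA An]; exists n.
  + by move=> x [n _ /AO On]; exists n.
  have sub1 : \bigcup_n O n `\` FF N `<=`
      (\bigcup_n O n `\` \bigcup_n F n) `|` (\bigcup_n F n `\` FF N).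
    move=> x [Ox nFFx]; have [UFx|nUFx] := pselect ((\bigcup_n F n) x).
      by right.
    by left.
  have sub2 : \bigcup_n O n `\` \bigcup_n F n `<=` \bigcup_n (O n `\` F n).
    move=> x [[n _ Onx] nUF]; exists n => //; split => // Fnx; apply: nUF.
    by exists n.
  have h1 : (mu (\bigcup_n O n `\` \bigcup_n F n) <= (e / 4)%:E)%E.
    apply: le_trans (@measure_sigma_subadditive _ _ _ mu _ (fun n => O n `\` F n)
      (fun n => measurableD (mO n) (mF n)) (measurableD mUO mUF) sub2) _.
    apply: le_trans (_ : (\sum_(0 <= n <oo) (0 + ((e / 4) / (2 ^ n.+1)%:R)%:E) <= _)%E).
      apply: lee_nneseries => [n _ _|n _]; first exact: measure_ge0.
      by rewrite add0e; apply: ltW.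
    apply: le_trans (epsilon_trick _ _ _) _ => //; first exact: ltW.
    by rewrite eseries0 ?add0e.
  have mU1 : measurable ((\bigcup_n O n `\` \bigcup_n F n) `|` (\bigcup_n F n `\` FF N)
     : set (borel_of G)).
    by apply: measurableU; apply: measurableD.
  have hle := (@le_measure _ _ _ mu _ _ (mem_set (measurableD mUO (mFF N)))
    (mem_set mU1) sub1).
  apply: (le_lt_trans hle).
  apply: le_lt_trans (measureU2 _ _ _) _.
  - exact: measurableD.
  - exact: measurableD.
  have -> : e = e / 4 + (e / 4 + e / 2) by lra.
  rewrite EFinD; apply: lee_ltD => //.
  - by apply: mu_fin => //; apply: measurableD.
  - by apply: lt_le_trans hN _; rewrite lee_fin; lra.
Qed.

End Reg2.


Lemma arith (R : realType) (s o f r u : R) : 0 < s -> s <= o -> o <= f + r ->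
  r < s / 3 -> u = f + f -> u <= o -> False.
Proof. lra. Qed.

Section Stein.
Variables (R : realType) (G : topologicalZmodType) (d : G -> G -> R).
Hypotheses (d0 : forall x y, 0 <= d x y) (dE : forall x y, d x y = 0 <-> x = y)
  (dC : forall x y, d x y = d y x) (dT : forall x y z, d x z <= d x y + d y z)
  (dO : forall U : set G, open U <->
           (forall x, U x -> exists2 e : R, 0 < e & [set y | d x y < e] `<=` U)).
Variable (mu : {measure set (borel_of G) -> \bar R}).
Hypothesis mu1 : mu setT = 1%E.
Hypothesis hinv : forall (x : G) (A : set (borel_of G)), measurable A ->
     mu [set x + a | a in A] = mu A.
Hypothesis cG : compact [set: G].

Let m (X : set G) := fine (mu X).

Lemma mE (X : set G) : measurable (X : set (borel_of G)) -> mu X = (m X)%:E.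
Proof. by move=> mX; rewrite /m fineK // mu_fin. Qed.

Lemma m_le (X Y : set G) : measurable (X : set (borel_of G)) ->
  measurable (Y : set (borel_of G)) -> X `<=` Y -> m X <= m Y.
Proof.
move=> mX mY XY; rewrite -lee_fin -mE // -mE //.
exact: (@le_measure _ _ _ mu _ _ (mem_set mX) (mem_set mY) XY).
Qed.

Lemma m_U2 (X Y : set G) : measurable (X : set (borel_of G)) ->
  measurable (Y : set (borel_of G)) -> m (X `|` Y) <= m X + m Y.
Proof.
move=> mX mY; rewrite -lee_fin EFinD -!mE //; last exact: measurableU.
exact: measureU2.
Qed.

Lemma m_U (X Y : set G) : measurable (X : set (borel_of G)) ->
  measurable (Y : set (borel_of G)) -> X `&` Y = set0 -> m (X `|` Y) = m X + m Y.
Proof.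
move=> mX mY XY; apply/eqP; rewrite -eqe EFinD -!mE //; last exact: measurableU.
by rewrite measureU.
Qed.

Lemma m_lt (X : set G) e : measurable (X : set (borel_of G)) -> (mu X < e%:E)%E -> m X < e.
Proof. by move=> mX; rewrite mE // lte_fin. Qed.

Lemma m_gt0 (X : set G) : measurable (X : set (borel_of G)) -> (0 < mu X)%E -> 0 < m X.
Proof. by move=> mX; rewrite mE // lte_fin. Qed.

Lemma m_tr (X : set G) x : measurable (X : set (borel_of G)) -> m [set x + a | a in X] = m X.
Proof. by move=> mX; rewrite /m hinv. Qed.

Lemma steinhaus (S : set G) : measurable (S : set (borel_of G)) -> (0 < mu S)%E ->
  exists V : set G, [/\ open V, V 0 & V `<=` [set s1 - s2 | s1 in S & s2 in S]].
Proof.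
move=> mS muS; have s0 := m_gt0 mS muS.
have [F [Ou [cF oO FS SO hOF]]] := reg_all dE dC dT dO mu1 mS (divr_gt0 s0 (ltr0n _ 3)).
have mF : measurable (F : set (borel_of G)) by exact: closed_meas.
have mO : measurable (Ou : set (borel_of G)) by exact: open_meas.
have h1 : m S <= m Ou by exact: m_le.
have h2 : m Ou <= m F + m (Ou `\` F).
  apply: le_trans (m_U2 mF (measurableD mO mF)); apply: m_le => //.
  - exact: measurableU (measurableD mO mF).
  - by move=> x Ox; have [Fx|nFx] := pselect (F x); [left|right].
have h3 : m (Ou `\` F) < m S / 3%:R by apply: m_lt => //; exact: measurableD.
have cpF : compact F by apply: (subclosed_compact cF cG).
have hcov : forall x, F x -> \forall x' \near x & i \near nbhs (0:G), Ou (x' + i).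
  move=> x Fx; have Ox : nbhs (x + 0) Ou.
    by rewrite addr0; apply: open_nbhs_nbhs; split => //; exact: SO (FS _ Fx).
  exact: (add_continuous (x, 0) _ Ox).
have := (compact_near_coveringP F).1 cpF G (nbhs (0:G)) (fun v x' => Ou (x' + v)) _ hcov.
move=> /(_ ltac:(exact: nbhs_filter)).
rewrite nbhsE /= => -[B [oB B0] BV].
exists B; split => // v Bv.
have sub := BV v Bv.
apply: contrapT => nv.
have mvF := translate_meas v mF.
have disj : F `&` [set v + a | a in F] = set0.
  apply/seteqP; split => // y [Fy [a Fa ya]]; apply: nv.
  by exists y; [exact: FS|exists a; [exact: FS|rewrite -ya addrK]].
have h4 : m (F `|` [set v + a | a in F]) = m F + m F by rewrite m_U // m_tr.
have h5 : m (F `|` [set v + a | a in F]) <= m Ou.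
  apply: m_le => //; first exact: measurableU.
  move=> x [Fx|[a Fa <-]]; first exact: SO (FS _ Fx).
  by rewrite addrC; apply: sub.
exact: (arith s0 h1 h2 h3 h4 h5).
Qed.
End Stein.


Lemma arith2 (R : realType) (a b c rr e : R) : a <= b + c -> b < rr -> c < rr -> rr + rr <= e -> a < e.
Proof. lra. Qed.

Lemma arith3 (R : realType) (e1 e2 rr : R) : 0 < e1 -> 0 < e2 -> rr < Num.min e1 e2 / 2 ->
  rr + rr <= e1 /\ rr + rr <= e2.
Proof.
move=> h1 h2; have [h3 h4] : Num.min e1 e2 <= e1 /\ Num.min e1 e2 <= e2 by rewrite !ge_min !lexx orbT.
move: (Num.min e1 e2) h3 h4 => m h3 h4 h5; lra.
Qed.

Lemma cont_m (G : topologicalZmodType) : continuous (fun z : G * G => z.1 *+ 2 + z.2).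
Proof.
move=> z.
have h1 : {for z, continuous (fun z : G * G => (z.1 *+ 2, z.2))}.
  apply: cvg_pair; last exact: cvg_snd.
  exact: (@continuous_comp _ _ _ fst (fun y : G => y *+ 2) z cvg_fst (@double_cont G _)).
exact: (continuous_comp h1 (@add_continuous G _)).
Qed.

Section Sep.
Variables (R : realType) (G : topologicalZmodType) (d : G -> G -> R).
Hypotheses (d0 : forall x y, 0 <= d x y) (dE : forall x y, d x y = 0 <-> x = y)
  (dC : forall x y, d x y = d y x) (dT : forall x y z, d x z <= d x y + d y z)
  (dO : forall U : set G, open U <->
           (forall x, U x -> exists2 e : R, 0 < e & [set y | d x y < e] `<=` U)).
Hypothesis cG : compact [set: G].

Let PG : Type := G.
HB.instance Definition _ := Topological.on PG.
HB.instance Definition _ := isPointed.Build PG (0:G).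

Lemma finite_net (e : R) : 0 < e -> exists s : seq G, forall x, exists2 c, c \in s & d c x < e.
Proof.
move=> e0; have cP : compact [set: PG] := cG.
rewrite compact_cover in cP.
have [] := cP G setT (fun c => [set y | d c y < e]).
- by move=> c _; exact: ball_open.
- by move=> x _; exists x => //=; rewrite (proj2 (dE x x) erefl).
move=> D' _ cov; exists (finmap.enum_fset D') => x; have [c /= cD' dcx] := cov x I.
by exists c.
Qed.


Lemma net_fun : exists c : nat -> nat -> G, forall n x, exists k, d (c n k) x < n.+1%:R^-1.
Proof.
have : forall n : nat, exists s : seq G, forall x, exists2 c, c \in s & d c x < n.+1%:R^-1.
  by move=> n; apply: finite_net; rewrite invr_gt0 ltr0Sn.
move=> /choice [L hL]; exists (fun n k => nth 0 (L n) k) => n x.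
by have [c cL dcx] := hL n x; exists (index c (L n)); rewrite nth_index.
Qed.

Lemma open_prod_meas (W : set (G * G)) : open W ->
  measurable (W : set (borel_of G * borel_of G)).
Proof.
move=> oW; have [c hc] := net_fun.
pose r (n : nat) : R := n.+1%:R^-1.
pose rect (i : nat * nat * nat * nat) : set (G * G) :=
  [set y | d (c i.1.1.1 i.1.1.2) y < r i.1.1.1] `*` [set y | d (c i.1.2 i.2) y < r i.1.2].
pose Fj (j : nat) : set (G * G) := match (unpickle j : option (nat * nat * nat * nat)) with
  | Some i => if pselect (rect i `<=` W) then rect i else set0 | None => set0 end.
have -> : W = \bigcup_j Fj j.
  apply/seteqP; split; last first.
    move=> z [j _]; rewrite /Fj; case: (unpickle j) => [i|//].
    by case: pselect => // h /h.
  move=> [x y] Wxy.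
  have : nbhs (x, y) W by apply: open_nbhs_nbhs.
  case=> -[U V] /= [nU nV] UVW.
  have [e1 e10 hU] := nbhs_ball dO nU; have [e2 e20 hV] := nbhs_ball dO nV.
  have [n hn] := @small_inv R (Num.min e1 e2 / 2) ltac:(by rewrite divr_gt0 // lt_min e10 e20).
  have [h1 h2] := arith3 e10 e20 hn.
  have [k hk] := hc n x; have [k' hk'] := hc n y.
  pose i := (n, k, n, k').
  have ri : rect i `<=` W.
    move=> [a b] [/= ha hb]; apply: UVW; split; [apply: hU | apply: hV] => /=.
      by apply: (arith2 _ hk ha h1); rewrite (dC (c n k) x); exact: dT.
    by apply: (arith2 _ hk' hb h2); rewrite (dC (c n k') y); exact: dT.
  exists (pickle i) => //; rewrite /Fj pickleK /=; case: pselect => // _.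
apply: bigcupT_measurable => j; rewrite /Fj; case: unpickle => [i|//].
case: pselect => h /=; last exact: measurable0.
apply: measurableX; apply: open_meas; exact: (ball_open dT dO).
Qed.

Lemma meas_m : measurable_fun [set: borel_of G * borel_of G]
  ((fun z : G * G => z.1 *+ 2 + z.2) : borel_of G * borel_of G -> borel_of G).
Proof.
apply: (measurability (@borel_opens G)) => //.
move=> _ [U oU <-]; rewrite setTI; apply: open_prod_meas.
by move/continuousP : (@cont_m G); apply.
Qed.

End Sep.


Section Fub.
Variables (R : realType) (G : topologicalZmodType) (d : G -> G -> R).
Hypotheses (d0 : forall x y, 0 <= d x y) (dE : forall x y, d x y = 0 <-> x = y)
  (dC : forall x y, d x y = d y x) (dT : forall x y z, d x z <= d x y + d y z)
  (dO : forall U : set G, open U <->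
           (forall x, U x -> exists2 e : R, 0 < e & [set y | d x y < e] `<=` U)).
Hypothesis cG : compact [set: G].
Variable (mu : {measure set (borel_of G) -> \bar R}).
Hypothesis mu1 : mu setT = 1%E.
Hypothesis hinv : forall (x : G) (A : set (borel_of G)), measurable A ->
     mu [set x + a | a in A] = mu A.

Definition mus : set (borel_of G) -> \bar R := mu.
HB.instance Definition _ := Measure.on mus.
Lemma mus_sf : sigma_finite setT mus.
Proof.
apply: fin_num_fun_sigma_finite; first by rewrite measure0.
by move=> B mB; apply: mu_fin.
Qed.
HB.instance Definition _ := @Measure_isSigmaFinite.Build _ _ _ mus mus_sf.

Lemma exists_y0 (A : set G) : measurable (A : set (borel_of G)) -> (0 < mu A)%E ->
  exists y0 : G, (0 < mu [set a | A a /\ A (a *+ 2 + y0)%R])%E.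
Proof.
move=> mA muA.
pose P : set (borel_of G * borel_of G) := [set z | A z.1 /\ A (z.1 *+ 2 + z.2)].
have mP : measurable P.
  have -> : P = (A `*` setT) `&` ((fun z : G * G => z.1 *+ 2 + z.2) @^-1` A).
    by apply/seteqP; split => -[a y] /=; [case=> ? ?|case=> -[? ?] ?].
  apply: measurableI; first by apply: measurableX.
  have := meas_m dE dC dT dO cG measurableT mA; by rewrite setTI.
have := indic_fubini_tonelli mus mus mP.
rewrite (indic_fubini_tonelli_FE mus mP) (indic_fubini_tonelli_GE mus mP).
have hx : forall x, (mus \o xsection P) x = ((fine (mu A))%:E * (\1_A x)%:E)%E.
  move=> x /=; have [Ax|nAx] := pselect (A x).
    rewrite indicE mem_set // mule1 fineK ?mu_fin //.
    have -> : xsection P x = [set - (x *+ 2) + a | a in A].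
      apply/seteqP; split => y; rewrite /xsection /= in_setE /=.
        by case=> _ h; exists (x *+ 2 + y) => //; rewrite addKr.
      by case=> a Aa <-; split => //; rewrite addNKr.
    exact: hinv.
  rewrite indicE memNset // mule0.
  have -> : xsection P x = set0.
    by apply/seteqP; split => y; rewrite /xsection /= in_setE /= => -[].
  exact: measure0.
rewrite (eq_integral (fun x : borel_of G => ((fine (mu A))%:E * (\1_A x)%:E)%E)); last by move=> x _; exact: hx.
rewrite ge0_integralZl_EFin //; try (by apply/measurable_realfun.measurable_EFinP; exact: (@measurable_realfun.measurable_indic _ _ R setT A mA));
  try (by move=> x _; rewrite lee_fin indicE); try (by rewrite fine_ge0 // measure_ge0).
rewrite integral_indic // setIT => h.
apply: contrapT => hn.
have h0 : (\int[mus]_y (mus \o ysection P) y = 0)%E.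
  apply: integral0_eq => y _ /=.
  have : ~ (0 < mu [set a | A a /\ A (a *+ 2 + y)%R])%E by move=> h1; apply: hn; exists y.
  have -> : ysection P y = [set a | A a /\ A (a *+ 2 + y)%R].
    by apply/seteqP; split => a; rewrite /ysection /= in_setE.
  move=> h1; apply/eqP; rewrite eq_le measure_ge0 andbT leNgt; apply/negP => h2; exact: h1 h2.
move: h; rewrite h0 => /eqP; rewrite mule_eq0 => /orP [] /eqP h1.
  have := muA; rewrite -(fineK (mu_fin mu1 mA)) h1; by rewrite ltxx.
have := muA; rewrite h1; by rewrite ltxx.
apply/measurable_realfun.measurable_EFinP. exact/measurable_realfun.measurable_indicP.

Qed.
End Fub.


Section Grp.
Variable G : topologicalZmodType.
Hypothesis hG : hausdorff_space G.
Hypothesis cG : compact [set: G].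

Let H := [set x *+ 2 | x in [set: G]].

Lemma compact_img (f : G -> G) (A : set G) : continuous f -> closed A ->
  compact [set f x | x in A].
Proof.
move=> cf cA; apply: continuous_compact; first exact: continuous_subspaceT.
exact: (subclosed_compact cA cG).
Qed.

Lemma closed_img (f : G -> G) (A : set G) : continuous f -> closed A ->
  closed [set f x | x in A].
Proof. by move=> cf cA; apply: compact_closed => //; exact: compact_img. Qed.

Lemma closedH : closed H.
Proof. apply: closed_img; [exact: double_cont | exact: closedT]. Qed.

Lemma parity (n : int) : exists k : int, n = k * 2 \/ n = k * 2 + 1.
Proof.
exists (n %/ 2)%Z; rewrite {1 3}(divz_eq n 2).
have h0 : (0 <= (n %% 2)%Z) by apply: modz_ge0.
have h2 : ((n %% 2)%Z < 2) by have := ltz_mod n (d := 2) isT.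
move: h0 h2; case: (n %% 2)%Z => [[|[|k]]|k] //= _ _; by [left; rewrite addr0|right].
Qed.

Lemma openH (g : G) : dense [set g *~ n | n in [set: int]] -> open H.
Proof.
move=> dg.
have cgH : closed [set g + h | h in H].
  by apply: closed_img; [exact: addl_cont|exact: closedH].
have cov : forall x : G, H x \/ [set g + h | h in H] x.
  move=> x; apply: contrapT => hx.
  have oC : open (~` (H `|` [set g + h | h in H])).
    by apply: closed_openC; apply: closedU => //; exact: closedH.
  have [y [nCy [n _ gny]]] := dg _ (ex_intro _ x (fun h => hx (or_ind (@or_introl _ _) (@or_intror _ _) h))) oC.
  apply: nCy; rewrite -gny; have [k [->|->]] := parity n.
    by left; exists (g *~ k) => //; rewrite mulrzA -mulrz_nat.
  by right; exists ((g *~ k) *+ 2); [exists (g *~ k)|rewrite mulrzDr mulrzA -mulrz_nat addrC].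
have [gH|ngH] := pselect (H g).
  suff -> : H = setT by exact: openT.
  apply/seteqP; split => // x _; case: (cov x) => // -[h [u _ <-] <-].
  case: gH => v _ <-; exists (v + u) => //; by rewrite mulrnDl.
suff -> : H = ~` [set g + h | h in H] by exact: closed_openC.
apply/seteqP; split => x.
  move=> Hx [h [u _ <-] gu]; apply: ngH; case: Hx => v _ vx.
  exists (v - u) => //; rewrite mulrnBl vx -gu; by rewrite addrK.
by case: (cov x).
Qed.


Lemma open_double (g : G) : dense [set g *~ n | n in [set: int]] ->
  forall V : set G, open V -> open [set v *+ 2 | v in V].
Proof.
move=> dg V oV.
pose C := ~` (\bigcup_(k in [set k : G | k *+ 2 = 0]) ((fun x => k + x) @^-1` V)).
have cC : closed C.
  apply: open_closedC; apply: bigcup_open => k _.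
  by move/continuousP : (@addl_cont G k); apply.
have -> : [set v *+ 2 | v in V] = H `&` ~` [set x *+ 2 | x in C].
  apply/seteqP; split.
    move=> _ [v Vv <-]; split; first by exists v.
    move=> [c Cc cv]; apply: Cc; exists (v - c); last by rewrite /= addrNK.
    by rewrite /= mulrnBl cv subrr.
  move=> _ [[x _ <-] nC].
  have nCx : ~ C x by move=> Cx; apply: nC; exists x.
  have [k /= k2 Vkx] := contrapT nCx.
  by exists (k + x) => //; rewrite mulrnDl k2 add0r.
apply: openI; first exact: (openH dg).
by apply: closed_openC; apply: closed_img => //; exact: double_cont.
Qed.

End Grp.

Unset Implicit Arguments.
Theorem corollary7p6 (R : realType) (G : topologicalZmodType)
  (mu : {measure set (borel_of G) -> \bar R}) (A : set G) :
  compact [set: G] -> metrizable R G -> monothetic G ->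
  haar_measure mu ->
  measurable (A : set (borel_of G)) -> (0 < mu A)%E ->
  exists U : set G, [/\ open U, U !=set0 & U `<=` twoA_minus_A A].
Proof.
move=> cG [d [d0 dE dC dT dO]] [g dg] [mu1 hinv] mA muA.
have hG := hausdorffG d0 dE dC dT dO.
have [y0 hy0] := exists_y0 dE dC dT dO cG mu1 hinv mA muA.
pose S := [set a | A a /\ A (a *+ 2 + y0)].
have mS : measurable (S : set (borel_of G)).
  have -> : S = A `&` ((fun a => a *+ 2 + y0) @^-1` A) by [].
  have hc : continuous (fun a : G => a *+ 2 + y0).
    have -> : (fun a : G => a *+ 2 + y0) = (fun b => y0 + b) \o (fun a => a *+ 2).
      by apply/funext => a; rewrite /= addrC.
    by apply: comp_cont; [exact: addl_cont|exact: double_cont].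
  by apply: measurableI => //; exact: preimage_meas hc mA.
have [V [oV V0 VS]] := steinhaus dE dC dT dO mu1 hinv cG mS hy0.
exists [set - y0 + w | w in [set v *+ 2 | v in V]]; split.
- rewrite translate_preimage; move/continuousP : (@addl_cont G (- - y0)); apply.
  exact: (open_double hG cG dg oV).
- by exists (- y0 + 0 *+ 2); exists (0 *+ 2) => //; exists 0.
- move=> _ [_ [v Vv <-] <-].
  have [s1 [As1 _] [s2 [As2 As2'] <-]] := VS v Vv.
  exists s1 => //; exists (s2 *+ 2 + y0) => //.
  by rewrite mulrnBl opprD addrA [RHS]addrC.
Qed.
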